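(* Let $\mathcal{G}_R$ be the class of all finite reflexive graphs and let $G\in\mathcal{G}_R$. The class $\mathrm{Av}(G)=\{H\in\mathcal{G}_R: G\not\preceq H\}$, with respect to the homomorphic image ordering $\preceq$, is well quasi-ordered if and only if $G$ is isomorphic to $N_{n,k}$ for some natural numbers $n,k$ with $2k<n$.
   Context: A reflexive graph is a set with a symmetric edge relation having a loop at every vertex. A homomorphism maps edges to edges (and may collapse edges or non-edges to single vertices). Homomorphic image ordering: $A\preceq B$ iff there is a surjective homomorphism $B\to A$. For $2k\le n$, $N_{n,k}$ is the reflexive graph on $\{1,\dots,n\}$ with all pairs of distinct vertices adjacent except $\{1,2\},\{3,4\},\dots,\{2k-1,2k\}$ (obtained from $K_n$ by deleting $k$ disjoint edges). Well quasi-ordered means no infinite strictly decreasing sequence and no infinite antichain; graphs considered up to isomorphism. *)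

(* Defs.v *)
From mathcomp Require Import all_boot.
Set Implicit Arguments. Unset Strict Implicit. Unset Printing Implicit Defensive.

Record RGraph := MkRGraph {
  gsize : nat;
  gadj : rel 'I_gsize;
  gsym : symmetric gadj;
  grefl : reflexive gadj }.

Arguments gadj : clear implicits.
Definition is_hom (A B : RGraph) (f : 'I_(gsize A) -> 'I_(gsize B)) : Prop :=
  forall x y, gadj A x y -> gadj B (f x) (f y).

Definition himg_le (A B : RGraph) : Prop :=
  exists f : 'I_(gsize B) -> 'I_(gsize A),
    is_hom (A:=B) (B:=A) f /\ (forall y, exists x, f x = y).

Definition himg_lt (A B : RGraph) : Prop := himg_le A B /\ ~ himg_le B A.

Definition giso (A B : RGraph) : Prop :=
  exists f : 'I_(gsize A) -> 'I_(gsize B),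
    bijective f /\ (forall x y, gadj B (f x) (f y) = gadj A x y).

Definition Av (G : RGraph) (H : RGraph) : Prop := ~ himg_le G H.

Definition wqo_class (P : RGraph -> Prop) : Prop :=
  (~ exists s : nat -> RGraph,
       (forall i, P (s i)) /\ (forall i, himg_lt (s i.+1) (s i))) /\
  (~ exists s : nat -> RGraph,
       (forall i, P (s i)) /\
       (forall i j, i <> j -> ~ himg_le (s i) (s j))).

(* N_{n,k}: K_n on {0..n-1} minus the edges {2i,2i+1}, i < k
   (0-indexed version of {1,2},...,{2k-1,2k}). *)
Definition Nadj (n k : nat) : rel 'I_n :=
  fun x y => (x == y) || ~~ ((x./2 == y./2) && (x./2 < k)).

Arguments Nadj : clear implicits.

Lemma Nadj_sym n k : symmetric (Nadj n k).
Proof.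
move=> x y; rewrite /Nadj [y == x]eq_sym [y./2 == _]eq_sym.
by case: (x./2 =P y./2) => [->|]; rewrite ?andbF ?andbT.
Qed.

Lemma Nadj_refl n k : reflexive (Nadj n k).
Proof. by move=> x; rewrite /Nadj eqxx. Qed.

Definition Ngraph (n k : nat) : RGraph := MkRGraph (@Nadj_sym n k) (@Nadj_refl n k).

(* Main.v *)
Require Import Defs.
From mathcomp Require Import all_boot zify.
From Stdlib Require Import Classical ClassicalEpsilon.
Set Implicit Arguments. Unset Strict Implicit. Unset Printing Implicit Defensive.

Lemma himg_trans A B C : himg_le A B -> himg_le B C -> himg_le A C.
Proof.
move=> [f [hf sf]] [g [hg sg]]; exists (f \o g); split.
  by move=> x y /hg /hf.
move=> y; have [x <-] := sf y; have [z <-] := sg x; by exists z.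
Qed.

Lemma himg_size A B : himg_le A B -> gsize A <= gsize B.
Proof.
move=> [f [_ sf]].
have -> : gsize A = #|[set f x | x in 'I_(gsize B)]|.
  rewrite -[LHS]card_ord; apply: eq_card => y; rewrite inE.
  have [x <-] := sf y; by rewrite imset_f.
by rewrite (leq_trans (leq_imset_card _ _)) // card_ord.
Qed.

Lemma giso_inv A B : giso A B -> himg_le A B.
Proof.
move=> [f [[g fg gf] hf]]; exists g; split.
  by move=> x y h; rewrite -hf !gf.
by move=> y; exists (f y); rewrite fg.
Qed.

Lemma injective_card (A B : RGraph) (f : 'I_(gsize A) -> 'I_(gsize B)) :
  injective f -> gsize A <= gsize B.
Proof. move=> /leq_card; by rewrite !card_ord. Qed.


Definition ecount (H : RGraph) :=
  #|[pred p : 'I_(gsize H) * 'I_(gsize H) | gadj H p.1 p.2]|.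

Lemma ecount_le H : ecount H <= gsize H * gsize H.
Proof.
rewrite /ecount (leq_trans (max_card _)) // card_prod card_ord //.
Qed.

Lemma lt_measure A B : himg_lt A B ->
  gsize A < gsize B \/ (gsize A = gsize B /\ ecount B < ecount A).
Proof.
move=> [[f [hf sf]] nBA].
have := himg_size (ex_intro _ f (conj hf sf)) => le.
case: (ltnP (gsize A) (gsize B)) => [|ge]; first by left.
right; have eqs : gsize A = gsize B by apply/eqP; rewrite eqn_leq le ge.
split => //.
have finj : injective f.
  have : {in [set: 'I_(gsize B)] &, injective f}.
    apply/imset_injP; rewrite cardsT card_ord; apply/eqP.
    transitivity (gsize A); last by [].
    rewrite -[RHS]card_ord; apply: eq_card => y.
    rewrite inE; have [x <-] := sf y; by rewrite imset_f.
  by move=> inj x y; apply: inj; rewrite inE.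
pose F (p : 'I_(gsize B) * 'I_(gsize B)) := (f p.1, f p.2).
have Finj : injective F by move=> [a b] [c d] [] /finj -> /finj ->.
pose EB := [set p : 'I_(gsize B) * 'I_(gsize B) | gadj B p.1 p.2].
pose EA := [set p : 'I_(gsize A) * 'I_(gsize A) | gadj A p.1 p.2].
have sub : F @: EB \subset EA.
  apply/subsetP => q /imsetP [p]; rewrite !inE => hp ->; exact: hf.
have cB : ecount B = #|EB| by apply: eq_card => p; rewrite !inE.
have cA : ecount A = #|EA| by apply: eq_card => p; rewrite !inE.
have cF : #|F @: EB| = #|EB| by apply: card_imset.
rewrite ltn_neqAle cA cB -cF subset_leq_card // andbT.
apply/negP => /eqP e.
have eqE : F @: EB = EA by apply/eqP; rewrite eqEcard sub e leqnn.
apply: nBA.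
have : forall y : 'I_(gsize A), exists x, f x = y by [].
move=> /fin_all_exists [g fg].
have gf : forall x, g (f x) = x by move=> x; apply: finj; rewrite fg.
exists g; split; last by move=> x; exists (f x); rewrite gf.
move=> y1 y2 h.
have : (y1, y2) \in F @: EB by rewrite eqE inE.
case/imsetP => [[p1 p2]]; rewrite inE /= => hp [e1 e2].
by rewrite e1 e2 !gf.
Qed.

Lemma no_desc (s : nat -> RGraph) : ~ (forall i, himg_lt (s i.+1) (s i)).
Proof.
move=> hs.
have gle : forall i, gsize (s i) <= gsize (s 0).
  elim=> // i IH; case: (hs i) => h _; exact: leq_trans (himg_size h) IH.
pose N := gsize (s 0) * gsize (s 0).
have eN : forall i, ecount (s i) <= N.
  move=> i; apply: leq_trans (ecount_le _) _; exact: leq_mul.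
pose mu i := gsize (s i) * N.+1 + (N - ecount (s i)).
have dec : forall i, mu i.+1 < mu i.
  move=> i; rewrite /mu; have := eN i; have := eN i.+1.
  case: (lt_measure (hs i)) => [lt | [eq lt]].
    have : (gsize (s i.+1)).+1 * N.+1 <= gsize (s i) * N.+1.
      by rewrite leq_mul2r lt orbT.
    rewrite mulSn; lia.
  rewrite eq; lia.
have : forall i, mu i + i <= mu 0.
  elim=> [|i IH]; first by rewrite addn0.
  by apply: leq_trans IH; rewrite addnS ltn_add2r.
move=> /(_ (mu 0).+1); lia.
Qed.


Section Pairs.
Variable T : eqType.
Definition fl (P : seq (T * T)) := flatten [seq [:: p.1; p.2] | p <- P].

Lemma size_fl P : size (fl P) = 2 * size P.
Proof. by elim: P => //= p P IH; rewrite /fl /= -/(fl P) IH; lia. Qed.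

Lemma nth_fl d P j : j < size P ->
  nth d (fl P) (2 * j) = (nth (d, d) P j).1 /\
  nth d (fl P) (2 * j).+1 = (nth (d, d) P j).2.
Proof.
elim: P j => // p P IH [|j] ltj; first by [].
have -> : 2 * j.+1 = (2 * j).+2 by lia.
rewrite /fl /= -/(fl P).
by apply: IH.
Qed.

Lemma fl_take_prefix P k : fl P = fl (take k P) ++ fl (drop k P).
Proof. by rewrite /fl -flatten_cat -map_cat cat_take_drop. Qed.
End Pairs.

Section Graph.
Variable H : RGraph.
Local Notation V := ('I_(gsize H)).
Local Notation adj := (gadj H).

Definition validP (P : seq (V * V)) :=
  uniq (fl P) && all (fun p => ~~ adj p.1 p.2) P.
Definition coverP (S : seq V) := forall x y, x \notin S -> y \notin S -> adj x y.

Lemma validP_pair P i1 i2 d : validP P -> i1 < size (fl P) -> i2 < size (fl P) ->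
  i1 <> i2 -> i1./2 = i2./2 -> ~~ adj (nth d (fl P) i1) (nth d (fl P) i2).
Proof.
case/andP => _ /allP hall; rewrite size_fl => l1 l2 ne e.
have lj : i1./2 < size P by rewrite ltn_half_double -mul2n; apply: l1.
have [e1 e2] := nth_fl d lj.
have hp := hall _ (mem_nth (d, d) lj).
case: (boolP (odd i1)) => o.
  have -> : i1 = (2 * i1./2).+1 by lia.
  have -> : i2 = 2 * i1./2 by lia.
  by rewrite e1 e2 gsym.
have -> : i1 = 2 * i1./2 by lia.
have -> : i2 = (2 * i1./2).+1 by lia.
by rewrite e1 e2.
Qed.

Lemma exists_maximal : exists P, validP P /\ coverP (fl P).
Proof.
suff : forall d P, validP P -> gsize H - size (fl P) <= d ->
         exists P', validP P' /\ coverP (fl P').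
  by move/(_ (gsize H) [::]); apply; rewrite // subn0.
elim=> [|d IH] P vP hd.
  exists P; split => // x y hx hy; exfalso.
  have : size (x :: fl P) <= size (enum V).
    apply: uniq_leq_size; first by rewrite /= hx; case/andP: vP.
    by move=> z _; rewrite mem_enum.
  rewrite size_enum_ord /= => h; have : size (fl P) < gsize H := h; lia.
case: (boolP [forall x, forall y, (x \notin fl P) ==> (y \notin fl P) ==> adj x y]).
  move=> /forallP h; exists P; split => // x y hx hy.
  by move: (h x) => /forallP /(_ y); rewrite hx hy.
move=> /forallPn [x] /forallPn [y]; rewrite !negb_imply => /and3P [hx hy na].
have xy : x != y by apply: contraNneq na => ->; rewrite grefl.
apply: (IH ((x, y) :: P)).
  case/andP: vP => u a; rewrite /validP /= na a andbT /fl /= -/(fl P).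
  by rewrite inE negb_or xy hx hy u.
move: hd; rewrite /fl /= -/(fl P); lia.
Qed.
End Graph.


Section LSeq.
Variable H : RGraph.
Local Notation V := ('I_(gsize H)).
Local Notation adj := (gadj H).

Definition Lseq (A : seq V) := A ++ [seq v <- enum V | v \notin A].

Lemma Lseq_uniq A : uniq A -> uniq (Lseq A).
Proof.
move=> uA; rewrite /Lseq cat_uniq uA filter_uniq ?enum_uniq // andbT.
by apply/hasPn => v; rewrite mem_filter => /andP [].
Qed.

Lemma mem_Lseq A v : v \in Lseq A.
Proof. by rewrite /Lseq mem_cat mem_filter mem_enum andbT; case: (v \in A). Qed.

Lemma size_Lseq A : uniq A -> size (Lseq A) = gsize H.
Proof.
move=> uA; apply/eqP; rewrite eqn_leq; apply/andP; split.
  have h : size (Lseq A) <= size (enum V).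
    by apply: uniq_leq_size; [exact: Lseq_uniq | move=> v _; rewrite mem_enum].
  by rewrite size_enum_ord in h.
have h : size (enum V) <= size (Lseq A).
  by apply: uniq_leq_size; [exact: enum_uniq | move=> v _; exact: mem_Lseq].
by rewrite size_enum_ord in h.
Qed.

Lemma nth_Lseq A d i : i < size A -> nth d (Lseq A) i = nth d A i.
Proof. by move=> h; rewrite /Lseq nth_cat h. Qed.

Lemma index_Lseq A v : (index v (Lseq A) < size A) = (v \in A).
Proof.
rewrite /Lseq index_cat; case: ifP => h; first by rewrite index_mem h.
by apply/negbTE; rewrite -leqNgt leq_addr.
Qed.
End LSeq.

Lemma validP_take H (P : seq ('I_(gsize H) * 'I_(gsize H))) k : validP P -> validP (take k P).
Proof.
case/andP => u /allP a; apply/andP; split.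
  by move: u; rewrite (fl_take_prefix P k) cat_uniq => /andP [].
by apply/allP => p /mem_take /a.
Qed.

Lemma surjN H n k (P : seq ('I_(gsize H) * 'I_(gsize H))) : 2 * k < n -> n <= gsize H -> validP P -> k <= size P ->
  himg_le (Ngraph n k) H.
Proof.
move=> kn nH vP kP.
have n0 : 0 < n by lia.
have vP' := validP_take k vP.
set P' := take k P in vP'.
have sP' : size (fl P') = 2 * k by rewrite size_fl size_take_min (minn_idPl kP).
set A := fl P'.
have uA : uniq A by case/andP: vP'.
have ltf : forall v : 'I_(gsize H), minn (index v (Lseq A)) n.-1 < n.
  by move=> v; rewrite (leq_ltn_trans (geq_minr _ _)) // prednK.
pose f v : 'I_n := Ordinal (ltf v).
exists f; split.
  move=> x y hxy; change (Nadj n k (f x) (f y)); rewrite /Nadj.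
  case: (f x =P f y) => [_|ne]; first by [].
  apply/negP => /andP [/eqP e lk].
  have vx : val (f x) = minn (index x (Lseq A)) n.-1 := erefl.
  have vy : val (f y) = minn (index y (Lseq A)) n.-1 := erefl.
  rewrite vx vy in e lk.
  have ex : minn (index x (Lseq A)) n.-1 = index x (Lseq A) by lia.
  have ey : minn (index y (Lseq A)) n.-1 = index y (Lseq A) by lia.
  rewrite ex ey in e lk.
  have ix : index x (Lseq A) < size A by rewrite sP'; lia.
  have iy : index y (Lseq A) < size A by rewrite sP'; lia.
  have nxy : index x (Lseq A) <> index y (Lseq A).
    by move=> h; apply: ne; apply: val_inj; rewrite vx vy ex ey h.
  have hx : nth x A (index x (Lseq A)) = x.
    by rewrite -(nth_Lseq x ix) nth_index // mem_Lseq.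
  have hy : nth x A (index y (Lseq A)) = y.
    by rewrite -(nth_Lseq x iy) nth_index // mem_Lseq.
  have := validP_pair x vP' ix iy nxy e.
  change (~~ gadj H (nth x A (index x (Lseq A))) (nth x A (index y (Lseq A))) -> False).
  by rewrite hx hy hxy.
have x0 : 'I_(gsize H) := Ordinal (leq_trans n0 nH).
move=> b; exists (nth x0 (Lseq A) b).
have bs : b < size (Lseq A) by rewrite size_Lseq // (leq_trans (ltn_ord b) nH).
apply: val_inj; change (minn (index (nth x0 (Lseq A) b) (Lseq A)) n.-1 = b).
rewrite index_uniq ?Lseq_uniq //.
have bn : (b : nat) < n := ltn_ord b; lia.
Qed.

Lemma partner_gen H (P : seq ('I_(gsize H) * 'I_(gsize H))) x :
  validP P -> x \in fl P ->
  exists z, ~~ gadj H x z /\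
    (index x (Lseq (fl P)))./2 = (index z (Lseq (fl P)))./2 /\
    index x (Lseq (fl P)) <> index z (Lseq (fl P)) /\
    (index x (Lseq (fl P)))./2 < size P.
Proof.
move=> vP xA.
set A := fl P; set L := Lseq A.
have uA : uniq A by case/andP: vP.
have sA : size A = 2 * size P by rewrite size_fl.
have ix : index x L < size A by rewrite index_Lseq.
pose i' := if odd (index x L) then (index x L).-1 else (index x L).+1.
have i's : i' < size A by rewrite /i' sA; move: ix; rewrite sA; case: ifP => o; lia.
have ne : index x L <> i' by rewrite /i'; case: ifP => o; lia.
have hh : (index x L)./2 = i'./2 by rewrite /i'; case: ifP => o; lia.
have h0 : ~~ gadj H (nth x A (index x L)) (nth x A i') := validP_pair x vP ix i's ne hh.
have hx : nth x A (index x L) = x by rewrite -(nth_Lseq x ix) nth_index // mem_Lseq.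
rewrite hx in h0.
exists (nth x A i'); split => //.
have iz : index (nth x A i') L = i'.
  rewrite -(nth_Lseq x i's) index_uniq ?Lseq_uniq //.
  by rewrite /L /Lseq size_cat (leq_trans i's (leq_addr _ _)).
rewrite iz; split => //; split => //.
have : index x L < 2 * size P by rewrite -sA.
lia.
Qed.

Lemma classify G :
  (forall u v w, ~~ gadj G u v -> ~~ gadj G u w -> v = w) ->
  (exists u, forall v, gadj G u v) ->
  exists n k, 2 * k < n /\ giso G (Ngraph n k).
Proof.
move=> uniqnn [u0 hu0].
have [P [vP cP]] := exists_maximal G.
set A := fl P.
have uA : uniq A by case/andP: vP.
have sA : size A = 2 * size P by rewrite size_fl.
set L := Lseq A.
have ltf : forall v, index v L < gsize G.
  by move=> v; rewrite -{2}(size_Lseq uA) index_mem mem_Lseq.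
pose f v : 'I_(gsize G) := Ordinal (ltf v).
have finj : injective f.
  move=> x y e; have e' : index x L = index y L := congr1 val e.
  by rewrite -(nth_index x (mem_Lseq A x)) e' nth_index // mem_Lseq.
have partner : forall x y, x \in A -> ~~ gadj G x y ->
    (index x L)./2 = (index y L)./2 /\ index x L <> index y L /\ (index x L)./2 < size P.
  move=> x y xA nxy.
  have [z [nxz [e [ne lk]]]] := partner_gen vP xA.
  have yz := uniqnn _ _ _ nxy nxz.
  by rewrite yz.
exists (gsize G), (size P); split.
  have u0A : u0 \notin A.
    apply/negP => h.
    have [z [nxz _]] := partner_gen vP h.
    by rewrite hu0 in nxz.
  by rewrite -sA (leq_ltn_trans _ (ltf u0)) // leqNgt index_Lseq.
exists f; split; first exact: injF_bij.
move=> x y; change (Nadj (gsize G) (size P) (f x) (f y) = gadj G x y); rewrite /Nadj.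
case: (eqVneq x y) => [-> | nxy]; first by rewrite eqxx grefl.
have fxy : (f x == f y) = false by apply/negbTE; apply: contra_neq nxy => /finj.
rewrite fxy orFb.
have vx : val (f x) = index x L := erefl.
have vy : val (f y) = index y L := erefl.
rewrite vx vy.
case: (boolP (gadj G x y)) => hxy.
  apply/negP => /andP [/eqP e lk].
  have ix : index x L < size A by rewrite sA; lia.
  have iy : index y L < size A by rewrite sA; lia.
  have nxy' : index x L <> index y L.
    by move=> h; apply: (negP nxy); apply/eqP; apply: finj; apply: val_inj; rewrite vx vy.
  have h0 : ~~ gadj G (nth x A (index x L)) (nth x A (index y L)) :=
    validP_pair x vP ix iy nxy' e.
  have hx : nth x A (index x L) = x by rewrite -(nth_Lseq x ix) nth_index // mem_Lseq.
  have hy : nth x A (index y L) = y by rewrite -(nth_Lseq x iy) nth_index // mem_Lseq.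
  by rewrite hx hy hxy in h0.
apply/negPn.
case: (boolP (x \in A)) => xA.
  have [e [_ lk]] := partner x y xA hxy.
  by rewrite e eqxx -e lk.
case: (boolP (y \in A)) => yA.
  have [e [_ lk]] := partner y x yA ltac:(by rewrite gsym).
  by rewrite -e eqxx lk.
by rewrite (cP x y xA yA) in hxy.
Qed.


Definition allnn (G : RGraph) := forall g, exists g', ~~ gadj G g g'.
Definition le1nn (G : RGraph) (u : 'I_(gsize G)) :=
  forall z w, ~~ gadj G u z -> ~~ gadj G u w -> z = w.

Section Hom.
Variables (H G : RGraph) (f : 'I_(gsize H) -> 'I_(gsize G)).
Hypothesis hf : is_hom f.
Hypothesis sf : forall y, exists x, f x = y.
Hypothesis nnG : allnn G.

Lemma nn_cls u : exists v, f v <> f u /\ ~~ gadj H u v /\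
  forall x, f x = f u -> ~~ gadj H x v.
Proof.
have [g' ng'] := nnG (f u).
have [v fv] := sf g'.
have fx : forall x, f x = f u -> ~~ gadj H x v.
  move=> x fxu; apply/negP => /hf; rewrite fxu fv; exact/negP.
exists v; split; last by split => //; apply: fx.
by move=> e; move: ng'; rewrite -fv e grefl.
Qed.

Lemma priv1 u u' : le1nn u -> ~~ gadj H u u' -> f u' <> f u.
Proof.
move=> l1 nu; have [v [fvu [nv _]]] := nn_cls u.
by rewrite (l1 _ _ nu nv).
Qed.

Lemma priv2 u : le1nn u -> (forall z, ~~ gadj H u z -> le1nn z) ->
  forall x, f x = f u -> x = u.
Proof.
move=> l1 l2 x fxu; have [v [_ [nv hv]]] := nn_cls u.
have nvx : ~~ gadj H v x by rewrite gsym; apply: hv.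
have nvu : ~~ gadj H v u by rewrite gsym.
exact: (l2 _ nv _ _ nvx nvu).
Qed.
End Hom.

Lemma Nadj_nn n k (x z : 'I_n) : ~~ Nadj n k x z ->
  (x : nat) <> z /\ x./2 = z./2 /\ x./2 < k.
Proof.
rewrite /Nadj negb_or negbK => /andP [ne /andP [/eqP e lk]].
split => // h; apply: (negP ne); apply/eqP; exact: val_inj.
Qed.

Lemma Nadj_pair n k (x z : 'I_n) : (x : nat) <> z -> x./2 = z./2 -> x./2 < k ->
  ~~ Nadj n k x z.
Proof.
move=> ne e lk; rewrite /Nadj negb_or negbK e eqxx /=; rewrite -e lk andbT.
by apply/eqP => h; apply: ne; rewrite h.
Qed.

Definition Agraph m := Ngraph (2 * m + 2) m.+1.

Lemma partner_lt N (x : 'I_N) : (~~ odd N) ->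
  (if odd x then (x : nat).-1 else (x : nat).+1) < N.
Proof. move=> oN; have := ltn_ord x; case: ifP => o; lia. Qed.

Lemma A_allnn m : allnn (Agraph m).
Proof.
move=> x.
have oN : ~~ odd (2 * m + 2) by rewrite addn2 /= negbK mul2n odd_double.
exists (Ordinal (partner_lt x oN)).
case: x => x hx /=.
have lx : x < 2 * m + 2 := hx.
apply: Nadj_pair; rewrite /=; [case: ifP => o; lia | case: ifP => o; lia | lia].
Qed.

Lemma A_le1nn m (u : 'I_(gsize (Agraph m))) : le1nn u.
Proof.
move=> z w /Nadj_nn [h1 [h2 h3]] /Nadj_nn [h4 [h5 h6]].
apply: val_inj; clear h3 h6; move: h1 h2 h4 h5; case: u => u hu; case: z => z hz; case: w => w hw /=.
lia.
Qed.

Lemma A_lower G m : allnn G -> himg_le G (Agraph m) -> 2 * m + 2 <= gsize G.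
Proof.
move=> nnG [f [hf sf]].
have finj : injective f.
  move=> x y e; symmetry; apply: (priv2 hf sf nnG) => //.
    exact: A_le1nn.
  move=> z _; exact: A_le1nn.
exact: (injective_card finj).
Qed.

Lemma A_avoid G m : (exists u v w, v <> w /\ ~~ gadj G u v /\ ~~ gadj G u w) ->
  ~ himg_le G (Agraph m).
Proof.
move=> [u [v [w [vw [nv nw]]]]] [f [hf sf]].
have [a fa] := sf u; have [b fb] := sf v; have [c fc] := sf w.
have nab : ~~ gadj (Agraph m) a b by apply/negP => /hf; rewrite fa fb; exact/negP.
have nac : ~~ gadj (Agraph m) a c by apply/negP => /hf; rewrite fa fc; exact/negP.
by apply: vw; rewrite -fb -fc (A_le1nn nab nac).
Qed.

Lemma A_antichain i j : i <> j -> ~ himg_le (Agraph i) (Agraph j).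
Proof.
move=> ne h.
have l1 := A_lower (@A_allnn i) h.
have l2 := himg_size h.
have : 2 * j + 2 <= 2 * i + 2 := l1.
have : 2 * i + 2 <= 2 * j + 2 := l2.
lia.
Qed.


Definition Bextra m (x y : 'I_(2 * m + 3)) : bool :=
  ((x == 0 :> nat) && (y == 2 * m + 2 :> nat)) ||
  ((y == 0 :> nat) && (x == 2 * m + 2 :> nat)).
Definition Badj m : rel 'I_(2 * m + 3) :=
  fun x y => Nadj (2 * m + 3) m.+1 x y && ~~ Bextra x y.

Lemma Badj_sym m : symmetric (@Badj m).
Proof. by move=> x y; rewrite /Badj Nadj_sym /Bextra orbC. Qed.

Lemma Badj_refl m : reflexive (@Badj m).
Proof.
move=> x; rewrite /Badj Nadj_refl /Bextra /=.
by case: x => x hx /=; apply/negP => /orP [] /andP [/eqP -> /eqP]; lia.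
Qed.

Definition Bgraph m := MkRGraph (@Badj_sym m) (@Badj_refl m).

Lemma Bnn m (x z : 'I_(2 * m + 3)) : ~~ Badj x z ->
  ((x : nat) <> z /\ x./2 = z./2 /\ x./2 < m.+1) \/
  ((x : nat) = 0 /\ (z : nat) = 2 * m + 2) \/ ((z : nat) = 0 /\ (x : nat) = 2 * m + 2).
Proof.
rewrite /Badj negb_and negbK => /orP [/Nadj_nn h | /orP [] /andP [/eqP h1 /eqP h2]].
- by left.
- by right; left.
- by right; right.
Qed.

Lemma Bnn_intro m (x z : 'I_(2 * m + 3)) :
  ((x : nat) <> z /\ x./2 = z./2 /\ x./2 < m.+1) \/
  ((x : nat) = 0 /\ (z : nat) = 2 * m + 2) -> ~~ Badj x z.
Proof.
rewrite /Badj negb_and negbK => [[[h1 [h2 h3]] | [h1 h2]]].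
  by rewrite Nadj_pair.
by rewrite /Bextra h1 h2 !eqxx orbT.
Qed.

Lemma B_allnn m : allnn (Bgraph m).
Proof.
move=> [x hx].
have hx' : x < 2 * m + 3 := hx.
case: (ltnP x (2 * m + 2)) => lx.
  have pl : (if odd x then x.-1 else x.+1) < 2 * m + 3 by case: ifP => o; lia.
  exists (Ordinal pl); apply: Bnn_intro; left => /=; case: ifP => o; lia.
have pl : 0 < 2 * m + 3 by lia.
exists (Ordinal pl); rewrite gsym; apply: Bnn_intro; right => /=; lia.
Qed.

Lemma B_pure m (u : 'I_(2 * m + 3)) : 2 <= u < 2 * m + 2 ->
  le1nn (G := Bgraph m) u /\ forall z, ~~ Badj u z -> 2 <= z < 2 * m + 2.
Proof.
move=> hu; split.
  move=> z w /Bnn h1 /Bnn h2; apply: val_inj.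
  move: hu h1 h2; case: u => u ? ; case: z => z ?; case: w => w ? /=; lia.
move=> z /Bnn; move: hu; case: u => u ? ; case: z => z ? /=; lia.
Qed.

Lemma B_lower G m : allnn G -> himg_le G (Bgraph m) -> 2 * m + 2 <= gsize G.
Proof.
move=> nnG [f [hf sf]].
have le : 2 * m + 2 <= 2 * m + 3 by lia.
pose h (i : 'I_(2 * m + 2)) := f (widen_ord le i).
suff hinj : injective h by move: hinj => /leq_card; rewrite !card_ord.
have pure_inj : forall (u x : 'I_(gsize (Bgraph m))), 2 <= u < 2 * m + 2 ->
    f x = f u -> x = u.
  move=> u x hu; have [l1 l2] := B_pure hu.
  apply: (priv2 hf sf nnG l1) => z nz.
  exact: (proj1 (B_pure (l2 z nz))).
have o1 : 1 < 2 * m + 3 by lia.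
have o0 : 0 < 2 * m + 3 by lia.
have f01 : f (Ordinal o0) <> f (Ordinal o1).
  apply: (priv1 hf sf nnG (u := Ordinal o1 : 'I_(gsize (Bgraph m)))).
    move=> z w /Bnn h1 /Bnn h2; apply: val_inj.
    move: h1 h2; case: z => z ?; case: w => w ? /=; lia.
  by apply: Bnn_intro; left => /=; lia.
move=> i j e; apply: val_inj.
case: (ltnP 1 i) => hi.
  have hu : 2 <= widen_ord le i < 2 * m + 2 by rewrite /= hi ltn_ord.
  by have := pure_inj _ (widen_ord le j) hu (esym e) => /(congr1 val).
case: (ltnP 1 j) => hj.
  have hu : 2 <= widen_ord le j < 2 * m + 2 by rewrite /= hj ltn_ord.
  by have := pure_inj _ (widen_ord le i) hu e => /(congr1 val).
case: (eqVneq (i : nat) j) => [//|ne].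
exfalso; apply: f01.
have [[e1 e2]|[e1 e2]] : (widen_ord le i = Ordinal o0 /\ widen_ord le j = Ordinal o1) \/
                     (widen_ord le i = Ordinal o1 /\ widen_ord le j = Ordinal o0).
  have : ((i : nat) == 0) && ((j : nat) == 1) || ((i : nat) == 1) && ((j : nat) == 0).
    clear -ne hi hj; move: ne hi hj; case: i => i ?; case: j => j ? /=; lia.
  by case/orP => /andP [/eqP e1 /eqP e2]; [left|right]; split; apply: val_inj.
  by move: e; rewrite /h e1 e2.
by move: e; rewrite /h e1 e2 => ->.
Qed.

Lemma B_antichain i j : i <> j -> ~ himg_le (Bgraph i) (Bgraph j).
Proof.
move=> ne h.
have l1 := B_lower (@B_allnn i) h.
have l2 := himg_size h.
have : 2 * j + 2 <= 2 * i + 3 := l1.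
have : 2 * i + 3 <= 2 * j + 3 := l2.
lia.
Qed.


Lemma forward G : wqo_class (Av G) -> exists n k, 2 * k < n /\ giso G (Ngraph n k).
Proof.
move=> [_ nac].
case: (classic (exists u v w, v <> w /\ ~~ gadj G u v /\ ~~ gadj G u w)) => [h3 | h3].
  exfalso; apply: nac; exists Agraph; split.
    by move=> i; apply: A_avoid.
  by move=> i j ne; apply: A_antichain.
case: (classic (allnn G)) => [nn | nn].
  exfalso; apply: nac; exists (fun i => Bgraph (i + gsize G)); split.
    by move=> i h; have := B_lower nn h; lia.
  by move=> i j ne; apply: B_antichain; lia.
apply: classify.
  move=> u v w nv nw; apply: NNPP => ne; apply: h3; by exists u, v, w.
apply: NNPP => h; apply: nn => g; apply: NNPP => h'; apply: h; exists g => v.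
apply/negPn/negP => nv; apply: h'; by exists v.
Qed.


Lemma tail_min (u : nat -> nat) N : exists i, N <= i /\ forall j, i <= j -> u i <= u j.
Proof.
suff : forall v i, N <= i -> u i <= v -> exists i, N <= i /\ forall j, i <= j -> u i <= u j.
  by move/(_ (u N) N (leqnn _) (leqnn _)).
elim=> [|v IH] i Ni ui.
  exists i; split => // j _; lia.
case: (classic (forall j, i <= j -> u i <= u j)) => [h|h]; first by exists i.
have [j hj] : exists j, ~ (i <= j -> u i <= u j).
  by apply: NNPP => h'; apply: h => j; apply: NNPP => h''; apply: h'; exists j.
have ij : i <= j by apply: NNPP => h1; apply: hj => h2; exfalso; exact: h1.
have uj : u j < u i by rewrite ltnNge; apply/negP => h1; apply: hj.
apply: (IH j); lia.
Qed.

Lemma mono_sub (u : nat -> nat) : exists th : nat -> nat,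
  (forall a b, a < b -> th a < th b) /\ (forall a b, a < b -> u (th a) <= u (th b)).
Proof.
have nx : forall N, {i | N <= i /\ forall j, i <= j -> u i <= u j}.
  move=> N; apply: constructive_indefinite_description; exact: tail_min.
pose next N := proj1_sig (nx N).
have hn : forall N, N <= next N /\ forall j, next N <= j -> u (next N) <= u j.
  move=> N; exact: proj2_sig (nx N).
pose th := fix th a := if a is a'.+1 then next (th a').+1 else next 0.
have step : forall a, th a < th a.+1 by move=> a; have [h _] := hn (th a).+1.
have inc : forall a b, a < b -> th a < th b.
  move=> a b; elim: b => // b IH; rewrite ltnS leq_eqVlt => /orP [/eqP -> // | ab].
  exact: ltn_trans (IH ab) (step b).
exists th; split => // a b ab.
have [_ h] : 0 <= th a /\ forall j, th a <= j -> u (th a) <= u j.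
  case: a {ab} => [|a] /=; first by have [h1 h2] := hn 0.
  by have [h1 h2] := hn (th a).+1.
apply: h; exact: ltnW (inc _ _ ab).
Qed.

Lemma dickson (I : finType) (w : nat -> I -> nat) :
  exists i j, i < j /\ forall t, w i t <= w j t.
Proof.
suff : forall l : seq I, exists phi : nat -> nat,
    (forall a b, a < b -> phi a < phi b) /\
    (forall t, t \in l -> forall a b, a < b -> w (phi a) t <= w (phi b) t).
  move/(_ (enum I)) => [phi [inc mono]].
  exists (phi 0), (phi 1); split; first exact: inc.
  by move=> t; apply: mono; rewrite ?mem_enum.
elim=> [|t l [phi [inc mono]]].
  by exists id; split.
have [th [tinc tmono]] := mono_sub (fun a => w (phi a) t).
exists (phi \o th); split.
  by move=> a b ab; apply: inc; apply: tinc.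
move=> t'; rewrite inE => /orP [/eqP -> | tl] a b ab.
  exact: tmono.
by apply: mono => //; apply: tinc.
Qed.


Lemma onth_some T (x0 : T) s i : i < size s -> onth s i = Some (nth x0 s i).
Proof. by move=> h; rewrite onthE (nth_map x0). Qed.

Lemma onth_ex T (s : seq T) i : i < size s -> exists x, onth s i = Some x.
Proof. by case: s => // x s h; exists (nth x (x :: s) i); apply: onth_some. Qed.

Lemma cover_ex H n k : 2 * k < n -> ~ himg_le (Ngraph n k) H ->
  exists S : seq 'I_(gsize H), uniq S /\ size S < n /\ coverP S.
Proof.
move=> kn nle.
case: (ltnP (gsize H) n) => hn.
  exists (enum 'I_(gsize H)); rewrite enum_uniq size_enum_ord; split => //; split => //.
  by move=> x y; rewrite mem_enum.
have [P [vP cP]] := exists_maximal H.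
case: (leqP k (size P)) => kP; first by exfalso; apply: nle; apply: (surjN kn hn vP kP).
exists (fl P); split; first by case/andP: vP.
by rewrite size_fl; split => //; apply: leq_ltn_trans kn; rewrite leq_mul2l ltnW ?orbT.
Qed.

Section Sig.
Variables (n : nat) (H : RGraph) (S : seq 'I_(gsize H)).
Local Notation V := ('I_(gsize H)).

Definition tp (v : V) : {set 'I_n} :=
  [set i : 'I_n | (i < size S) && gadj H v (nth v S i)].
Definition adjS : {ffun 'I_n * 'I_n -> bool} :=
  [ffun p : 'I_n * 'I_n => if (onth S (nat_of_ord p.1), onth S (nat_of_ord p.2)) is (Some x, Some y) then gadj H x y else false].
Definition cls (t : {set 'I_n}) : seq V := [seq v <- enum V | (v \notin S) && (tp v == t)].
Definition cnt t := size (cls t).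
Definition supp : {set {set 'I_n}} := [set t | 0 < cnt t].

Lemma cls_uniq t : uniq (cls t).
Proof. by rewrite filter_uniq ?enum_uniq. Qed.

Lemma mem_cls t v : (v \in cls t) = (v \notin S) && (tp v == t).
Proof. by rewrite mem_filter mem_enum andbT. Qed.
End Sig.

Arguments tp n [H] S v.
Arguments adjS n [H] S.
Arguments cls n [H] S t.
Arguments cnt n [H] S t.
Arguments supp n [H] S.

Lemma key n (H H' : RGraph) (S : seq 'I_(gsize H)) (S' : seq 'I_(gsize H')) :
  uniq S -> uniq S' -> size S <= n -> coverP S -> coverP S' ->
  size S = size S' -> adjS n S = adjS n S' -> supp n S = supp n S' ->
  (forall t, cnt n S t <= cnt n S' t) -> himg_le H H'.
Proof.
move=> uS uS' Sn cS cS' eS eA eSu ec.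
case: (posnP (gsize H)) => [h0 | hpos].
  have hV : forall x : 'I_(gsize H), False by move=> x; have := ltn_ord x; lia.
  have hem : forall v' : 'I_(gsize H'), False.
    move=> v'; case: (boolP (v' \in S')) => hv.
      have : 0 < size S by rewrite eS; case: (S') hv.
      by case: (S) => // x; case: (hV x).
    have : tp n S' v' \in supp n S'.
      by rewrite inE /cnt; case e: (cls _ _ _) => //; move: (mem_cls S' (tp n S' v') v');
         rewrite e hv eqxx.
    by rewrite -eSu inE /cnt; case: (cls _ _ _) => // x; case: (hV x).
  by exists (fun v' => match hem v' with end); split => [x|y]; [case: (hem x)|case: (hV y)].
set x0 : 'I_(gsize H) := Ordinal hpos.
pose f (v' : 'I_(gsize H')) : 'I_(gsize H) :=
  if v' \in S' then nth x0 S (index v' S')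
  else nth x0 (cls n S (tp n S' v')) (minn (index v' (cls n S' (tp n S' v'))) (cnt n S (tp n S' v')).-1).
have fin : forall v', v' \in S' -> f v' = nth x0 S (index v' S') /\ index v' S' < size S.
  by move=> v' hv; rewrite /f hv eS index_mem.
have fout : forall v', v' \notin S' -> f v' \in cls n S (tp n S' v').
  move=> v' hv; rewrite /f (negbTE hv).
  have : tp n S' v' \in supp n S'.
    rewrite inE /cnt; have : v' \in cls n S' (tp n S' v') by rewrite mem_cls hv eqxx.
    by case: (cls _ _ _).
  rewrite -eSu inE => c0; apply: mem_nth; rewrite /cnt in c0 *.
  by rewrite (leq_ltn_trans (geq_minr _ _)) // prednK.
have inout : forall x' y', x' \in S' -> y' \notin S' -> gadj H' x' y' -> gadj H (f x') (f y').
  move=> x' y' hx hy a.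
  have [e1 i1] := fin x' hx.
  have := fout y' hy; rewrite mem_cls => /andP [_ /eqP et].
  have ix : index x' S' < n := leq_trans i1 Sn.
  have : Ordinal ix \in tp n S' y'.
    rewrite inE /= -eS i1 /= nth_index //; by rewrite gsym.
  rewrite -et inE /= => /andP [_]; rewrite e1 gsym.
  by rewrite (set_nth_default x0).
exists f; split.
  move=> x' y' a.
  case: (boolP (x' \in S')) => hx; case: (boolP (y' \in S')) => hy.
  - have [e1 i1] := fin x' hx; have [e2 i2] := fin y' hy.
    have ix : index x' S' < n := leq_trans i1 Sn.
    have iy : index y' S' < n := leq_trans i2 Sn.
    have := congr1 (fun F : {ffun 'I_n * 'I_n -> bool} => F (Ordinal ix, Ordinal iy)) eA; rewrite !ffunE /=.
    rewrite (onth_some x0 i1) (onth_some x0 i2).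
    rewrite eS in i1 i2.
    rewrite (onth_some x' i1) (onth_some x' i2) !nth_index // e1 e2 => ->.
    exact: a.
  - exact: inout.
  - by rewrite gsym; apply: inout => //; rewrite gsym.
  - have := fout x' hx; rewrite mem_cls => /andP [nx _].
    have := fout y' hy; rewrite mem_cls => /andP [ny _].
    exact: cS.
move=> y.
case: (boolP (y \in S)) => hy.
  have iy : index y S < size S' by rewrite -eS index_mem.
  have [v' ev'] := onth_ex iy.
  have nv' := @onth_nth _ v' v' _ _ ev'.
  have v'S : v' \in S' by rewrite -nv' mem_nth.
  exists v'; have [-> _] := fin v' v'S.
  by rewrite -nv' index_uniq // nth_index.
set t := tp n S y.
have yc : y \in cls n S t by rewrite mem_cls hy eqxx.
have jc : index y (cls n S t) < cnt n S t by rewrite /cnt index_mem.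
have jc' : index y (cls n S t) < size (cls n S' t) by apply: leq_trans jc (ec t).
have [v' ev'] := onth_ex jc'.
have nv' := @onth_nth _ v' v' _ _ ev'.
have v'c : v' \in cls n S' t by rewrite -nv' mem_nth.
move: (v'c); rewrite mem_cls => /andP [v'S /eqP tv'].
exists v'; rewrite /f (negbTE v'S) tv' -nv' index_uniq ?cls_uniq //.
have -> : minn (index y (cls n S t)) (cnt n S t).-1 = index y (cls n S t) by lia.
by rewrite nth_index.
Qed.


Lemma backward G n k : 2 * k < n -> giso G (Ngraph n k) -> wqo_class (Av G).
Proof.
move=> kn iso; split; first by move=> [s [_ hs]]; exact: (no_desc hs).
move=> [s [avs anti]].
have nle : forall i, ~ himg_le (Ngraph n k) (s i).
  move=> i h; apply: (avs i); exact: himg_trans (giso_inv iso) h.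
have cov : forall i, {S : seq 'I_(gsize (s i)) | uniq S /\ size S < n /\ coverP S}.
  move=> i; apply: constructive_indefinite_description; exact: cover_ex kn (nle i).
pose S i := proj1_sig (cov i).
have hS : forall i, uniq (S i) /\ size (S i) < n /\ coverP (S i).
  move=> i; exact: proj2_sig (cov i).
pose Sig := ('I_n.+1 * {ffun 'I_n * 'I_n -> bool} * {set {set 'I_n}})%type.
have szl : forall i, size (S i) < n.+1.
  by move=> i; apply: leq_trans (proj1 (proj2 (hS i))) (leqnSn n).
pose sg i : Sig := (Ordinal (szl i), adjS n (S i), supp n (S i)).
pose w i (x : (Sig + {set 'I_n})%type) : nat :=
  match x with inl a => nat_of_bool (sg i == a) | inr t => cnt n (S i) t end.
have [i [j [ij hw]]] := dickson w.
have esg : sg i = sg j.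
  have := hw (inl (sg i)); rewrite /w eqxx /=.
  by case: eqP.
have e1 : size (S i) = size (S j) := congr1 (fun p : Sig => val p.1.1) esg.
have e2 : adjS n (S i) = adjS n (S j) := congr1 (fun p : Sig => p.1.2) esg.
have e3 : supp n (S i) = supp n (S j) := congr1 (fun p : Sig => p.2) esg.
have ne : i <> j by move=> h; rewrite h ltnn in ij.
apply: (anti i j ne).
have [u1 [l1 c1]] := hS i; have [u2 [l2 c2]] := hS j.
apply: (key (n := n) u1 u2 (ltnW l1) c1 c2 e1 e2 e3).
by move=> t; exact: (hw (inr t)).
Qed.

Theorem theorem3p4 (G : RGraph) :
  wqo_class (Av G) <-> exists n k : nat, 2 * k < n /\ giso G (Ngraph n k).
Proof.
split; first exact: forward.
by move=> [n [k [kn iso]]]; exact: backward kn iso.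
Qed.
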